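(* Let $Q$ be a manifold, $L:TQ\times\mathbb{R}\to\mathbb{R}$ a Lagrangian, $N\subseteq TQ\times\mathbb{R}$ a submanifold, and $X$ a vector field on $TQ\times\mathbb{R}$ verifying the second order equation condition along $N$, i.e. $S(X)_p=\Delta_p$ for all $p\in N$. Then, along $N$, $X$ solves the equations of motion $\bar\flat_L(X)=\gamma_{E_L}$ if and only if it solves Herglotz's equations, i.e. writing $X=\dot q^i\partial_{q^i}+b^i\partial_{\dot q^i}+c\,\partial_z$ along $N$, one has $c=L$ and $$b^i\frac{\partial^2L}{\partial\dot q^i\partial\dot q^j}+\dot q^i\frac{\partial^2L}{\partial q^i\partial\dot q^j}+L\frac{\partial^2L}{\partial z\partial\dot q^j}-\frac{\partial L}{\partial q^j}=\frac{\partial L}{\partial\dot q^j}\frac{\partial L}{\partial z}$$ on $N$, so that integral curves $(q^i(t),\dot q^i(t),z(t))$ of $X$ in $N$ satisfy $\dot z=L$ and $\frac{d}{dt}\big(\frac{\partial L}{\partial\dot q^i}\big)-\frac{\partial L}{\partial q^i}=\frac{\partial L}{\partial\dot q^i}\frac{\partial L}{\partial z}$.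
   Context: Bundle coordinates $(q^i,\dot q^i,z)$ on $TQ\times\mathbb{R}$. The canonical endomorphism is $S=dq^i\otimes\partial/\partial\dot q^i$, the Liouville vector field $\Delta=\dot q^i\partial/\partial\dot q^i$, $\eta_L=dz-\frac{\partial L}{\partial\dot q^i}dq^i$, $E_L=\Delta(L)-L$, $\bar\flat_L(v)=i_v d\eta_L+\eta_L(v)\eta_L$, and $\gamma_{E_L}=dE_L-(\mathcal{R}(E_L)+E_L)\eta_L$ where $\mathcal{R}$ is a vector field with $i_{\mathcal{R}}d\eta_L=0$, $\eta_L(\mathcal{R})=1$. ($L$ is not assumed regular; $\eta_L$ is assumed precontact so that such $\mathcal{R}$ exists.) *)

(* Defs.v *)
(* Local bundle coordinates (q^i, qdot^i, z) on
   TQ x R, with Q a coordinate chart, i.e. points are triples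
   (q, qdot, z) : 'rV[R]_n * 'rV[R]_n * R.  Tangent vectors at a point are
   represented by their components in the coordinate basis
   (d/dq^i, d/dqdot^i, d/dz), i.e. by elements of the same space; one-forms
   at a point are represented as functionals on tangent vectors. *)
From HB Require Import structures.
From mathcomp Require Import all_boot all_order all_algebra.
From mathcomp Require Import all_classical all_reals all_analysis.
Set Implicit Arguments. Unset Strict Implicit. Unset Printing Implicit Defensive.
Import Order.TTheory GRing.Theory Num.Theory.
Import numFieldNormedType.Exports.
Local Open Scope ring_scope.

Section Defs.
Variables (R : realType) (n : nat).

Definition TQR := ('rV[R]_n * 'rV[R]_n * R^o)%type.

Definition qc (p : TQR) : 'rV[R]_n := p.1.1.
Definition vc (p : TQR) : 'rV[R]_n := p.1.2.
Definition zc (p : TQR) : R := p.2.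

Definition dq_vec (i : 'I_n) : TQR := (('e_i : 'rV[R]_n)%R, 0, 0).
Definition dv_vec (i : 'I_n) : TQR := (0, ('e_i : 'rV[R]_n)%R, 0).
Definition dz_vec : TQR := (0, 0, 1).

Definition pdq (f : TQR -> R) (i : 'I_n) (p : TQR) : R := 'D_(dq_vec i) f p.
Definition pdv (f : TQR -> R) (i : 'I_n) (p : TQR) : R := 'D_(dv_vec i) f p.
Definition pdz (f : TQR -> R) (p : TQR) : R := 'D_dz_vec f p.

(* canonical endomorphism S = dq^i (x) d/dqdot^i, applied to a tangent vector *)
Definition Sendo (w : TQR) : TQR := (0, qc w, 0).
Definition Liouville (p : TQR) : TQR := (0, vc p, 0).

Definition dfun (f : TQR -> R) (p w : TQR) : R := 'D_w f p.

(* exterior derivative of a one-form field alpha (alpha p w = alpha_p(w)),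
   evaluated on two tangent vectors u w at p, using constant (coordinate)
   vector fields: d alpha(u,w) = u(alpha(w)) - w(alpha(u)). *)
Definition dform (alpha : TQR -> TQR -> R) (p u w : TQR) : R :=
  'D_u (fun x => alpha x w) p - 'D_w (fun x => alpha x u) p.

Variable L : TQR -> R.

Definition etaL (p w : TQR) : R :=
  zc w - \sum_(i < n) pdv L i p * qc w 0 i.

Definition energy (p : TQR) : R := dfun L p (Liouville p) - L p.

Definition flatL (p v : TQR) (w : TQR) : R :=
  dform etaL p v w + etaL p v * etaL p w.

Definition is_Reeb (Rf : TQR -> TQR) : Prop :=
  forall p, (forall w, dform etaL p (Rf p) w = 0) /\ etaL p (Rf p) = 1.

Definition gammaEL (Rf : TQR -> TQR) (p w : TQR) : R :=
  dfun energy p w - (dfun energy p (Rf p) + energy p) * etaL p w.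

Definition Herglotz (X : TQR -> TQR) (p : TQR) : Prop :=
  zc (X p) = L p /\
  forall j : 'I_n,
    \sum_(i < n) vc (X p) 0 i * pdv (pdv L j) i p
    + \sum_(i < n) vc p 0 i * pdq (pdv L j) i p
    + L p * pdz (pdv L j) p - pdq L j p
    = pdv L j p * pdz L p.

End Defs.

(* Main.v *)
Require Import Defs.
From HB Require Import structures.
From mathcomp Require Import all_boot all_order all_algebra.
From mathcomp Require Import all_classical all_reals all_analysis.
From mathcomp Require Import ring lra.
Import Order.TTheory GRing.Theory Num.Theory.
Import numFieldNormedType.Exports.
Local Open Scope ring_scope.

Section H.
Variables (R : realType) (n : nat).
Local Notation T := (TQR R n).

Lemma sum_fst (I : Type) (r : seq I) (F : I -> T) :
  (\sum_(i <- r) F i).1 = \sum_(i <- r) (F i).1.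
Proof. by apply: (big_morph fst). Qed.
Lemma sum_snd (I : Type) (r : seq I) (F : I -> T) :
  (\sum_(i <- r) F i).2 = \sum_(i <- r) (F i).2.
Proof. by apply: (big_morph snd). Qed.
Lemma sum_fst2 (I : Type) (r : seq I) (F : I -> 'rV[R]_n * 'rV[R]_n) :
  (\sum_(i <- r) F i).1 = \sum_(i <- r) (F i).1.
Proof. by apply: (big_morph fst). Qed.
Lemma sum_snd2 (I : Type) (r : seq I) (F : I -> 'rV[R]_n * 'rV[R]_n) :
  (\sum_(i <- r) F i).2 = \sum_(i <- r) (F i).2.
Proof. by apply: (big_morph snd). Qed.

Lemma wE (w : T) : w = \sum_(k < n) qc w 0 k *: dq_vec R k
   + \sum_(k < n) vc w 0 k *: dv_vec R k + zc w *: dz_vec R n.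
Proof.
case: w => [[a b] c].
rewrite /qc /vc /zc /=.
apply: injective_projections => /=.
  rewrite !sum_fst /=.
  apply: injective_projections => /=.
    rewrite !sum_fst2 /= [LHS]row_sum_delta.
    rewrite [X in _ = _ + X + _]big1; last by move=> i _; exact: scaler0.
    rewrite addr0; have -> : c *: (0 : 'rV[R]_n) = 0 by exact: scaler0.
    by rewrite addr0.
  rewrite !sum_snd2 /= [LHS]row_sum_delta.
  rewrite [X in _ = X + _ + _]big1; last by move=> i _; exact: scaler0.
  rewrite add0r; have -> : c *: (0 : 'rV[R]_n) = 0 by exact: scaler0.
  by rewrite addr0.
rewrite !sum_snd /=.
rewrite [X in _ = X + _ + _]big1; last by move=> i _; exact: mulr0.
rewrite [X in _ = _ + X + _]big1; last by move=> i _; exact: mulr0.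
by rewrite !add0r; symmetry; exact: mulr1.
Qed.

Lemma decomp (f : T -> R) p w : differentiable f p ->
  'D_w f p = \sum_(k < n) qc w 0 k * pdq f k p
     + \sum_(k < n) vc w 0 k * pdv f k p + zc w * pdz f p.
Proof.
move=> df; rewrite /pdq /pdv /pdz deriveE //.
rewrite {1}(wE w) !linearD !linear_sum /=.
rewrite (eq_bigr (fun k => qc w 0 k * 'D_(dq_vec R k) f p)); last first.
  by move=> k _; rewrite linearZ deriveE.
rewrite [X in _ + X + _](eq_bigr (fun k => vc w 0 k * 'D_(dv_vec R k) f p)); last first.
  by move=> k _; rewrite linearZ deriveE.
by rewrite linearZ deriveE.
Qed.


Lemma D_lin (V : normedModType R) (f : T -> V) :
  (forall (a : R) x y, f (a *: x + y) = a *: f x + f y) -> continuous f ->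
  forall p, differentiable f p /\ forall w, 'D_w f p = f w.
Proof.
move=> lin fc p.
pose M := GRing.isLinear.Build _ _ _ _ _ lin.
pose F : {linear T -> V} := HB.pack f M.
have -> : f = F by [].
split; first exact: linear_differentiable.
by move=> w; rewrite deriveE ?diff_lin //; exact: linear_differentiable.
Qed.

Lemma cont_qc : continuous (@qc R n).
Proof.
move=> x; rewrite (_ : @qc R n = fst \o fst) //.
by apply: continuous_comp; exact: cvg_fst.
Qed.
Lemma cont_vc : continuous (@vc R n).
Proof.
move=> x; rewrite (_ : @vc R n = snd \o fst) //.
by apply: continuous_comp; [exact: cvg_fst | exact: cvg_snd].
Qed.
Lemma cont_zc : continuous (@zc R n).
Proof. move=> x; exact: cvg_snd. Qed.
Lemma cont_vci i : continuous (fun x : T => vc x 0 i).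
Proof.
move=> x; rewrite (_ : (fun x : T => vc x 0 i) = (fun M : 'rV[R]_n => M 0 i) \o @vc R n) //.
by apply: continuous_comp; [exact: cont_vc | exact: coord_continuous].
Qed.

Lemma D_qc p : differentiable (@qc R n) p /\ forall w, 'D_w (@qc R n) p = qc w.
Proof. by apply: D_lin; last exact: cont_qc. Qed.
Lemma D_vc p : differentiable (@vc R n) p /\ forall w, 'D_w (@vc R n) p = vc w.
Proof. by apply: D_lin; last exact: cont_vc. Qed.
Lemma D_zc p : differentiable (@zc R n) p /\ forall w, 'D_w (@zc R n) p = zc w.
Proof. by apply: D_lin; last exact: cont_zc. Qed.
Lemma D_vci i p : differentiable (fun x : T => vc x 0 i) p /\
   forall w, 'D_w (fun x : T => vc x 0 i) p = vc w 0 i.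
Proof. by apply: D_lin; last exact: cont_vci; move=> a x y; rewrite /vc /= !mxE. Qed.

End H.

Section M.
Variables (R : realType) (n : nat) (L : TQR R n -> R).
Local Notation T := (TQR R n).
Hypothesis hL : forall p, differentiable L p.
Hypothesis hL2 : forall (u : T) p, differentiable (fun x => 'D_u L x) p.

Lemma dLv i p : differentiable (pdv L i) p.
Proof. exact: hL2. Qed.

Lemma D_eta p u w : 'D_u (fun x => etaL L x w) p =
  - \sum_(i < n) 'D_u (pdv L i) p * qc w 0 i.
Proof.
have -> : (fun x => etaL L x w) =
   cst (zc w) - \sum_(i < n) (fun x => pdv L i x * qc w 0 i).
  by apply/funext => x; rewrite /etaL fct_sumE.
have dv : forall i, derivable (fun x => pdv L i x * qc w 0 i) p u.
  move=> i; apply: derivableM; first exact/diff_derivable/dLv.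
  exact: derivable_cst.
rewrite deriveB; [|exact: derivable_cst|exact: derivable_sum].
rewrite derive_cst derive_sum // sub0r; congr (- _).
apply: eq_bigr => i _.
rewrite (_ : (fun x => pdv L i x * qc w 0 i) = pdv L i * cst (qc w 0 i)) //.
rewrite deriveM; [|exact/diff_derivable/dLv|exact: derivable_cst].
by rewrite derive_cst scaler0 add0r /GRing.scale /= mulrC.
Qed.


End M.

Section M2.
Variables (R : realType) (n : nat) (L : TQR R n -> R).
Local Notation T := (TQR R n).
Hypothesis hL : forall p, differentiable L p.
Hypothesis hL2 : forall (u : T) p, differentiable (fun x => 'D_u L x) p.

Lemma decompV p (b : 'rV[R]_n) : 'D_((0, b, 0) : T) L p = \sum_(k < n) b 0 k * pdv L k p.
Proof.
rewrite decomp //.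
rewrite /qc /zc /vc /=.
move: (pdq L) (pdv L) (pdz L) => A B C.
have z0 : forall k : 'I_n, (0 : 'rV[R]_n) 0 k = 0 by move=> k; rewrite mxE.
rewrite big1; last by move=> k _; rewrite z0 mul0r.
by rewrite mul0r add0r addr0.
Qed.


Lemma dform_eta p u w : dform (etaL L) p u w =
  - \sum_(i < n) 'D_u (pdv L i) p * qc w 0 i
  + \sum_(i < n) 'D_w (pdv L i) p * qc u 0 i.
Proof. by rewrite /dform !D_eta // opprK. Qed.

Lemma energyE : energy L = fun x => \sum_(i < n) vc x 0 i * pdv L i x - L x.
Proof. by apply/funext => x; rewrite /energy /dfun /Liouville decompV. Qed.

Lemma D_energy p w : dfun (energy L) p w =
  \sum_(i < n) (vc w 0 i * pdv L i p + vc p 0 i * 'D_w (pdv L i) p) - 'D_w L p.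
Proof.
rewrite /dfun energyE.
have -> : (fun x => \sum_(i < n) vc x 0 i * pdv L i x - L x) =
   \sum_(i < n) (fun x => vc x 0 i * pdv L i x) - L.
  by apply/funext => x; rewrite fct_sumE.
have dv : forall i, derivable (fun x => vc x 0 i * pdv L i x) p w.
  move=> i; apply: derivableM; first exact/diff_derivable/(@D_vci R n i p).1.
  exact/diff_derivable/dLv.
rewrite deriveB; [|exact: derivable_sum|exact/diff_derivable/hL].
rewrite derive_sum //; congr (_ - _).
apply: eq_bigr => i _.
rewrite (_ : (fun x => vc x 0 i * pdv L i x) = (fun x : T => vc x 0 i) * pdv L i) //.
rewrite deriveM; [|exact/diff_derivable/(@D_vci R n i p).1|exact/diff_derivable/dLv].
rewrite (@D_vci R n i p).2 addrC; congr (_ + _); exact: mulrC.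
Qed.

Lemma alg1 (a d wq wv v Lv Lq : 'I_n -> R) (wz Lz Ku RE E : R) :
 - (\sum_(i < n) a i * wq i) + \sum_(i < n) d i * v i + Ku * (wz - \sum_(i < n) Lv i * wq i)
 - (\sum_(i < n) (wv i * Lv i + v i * d i)
    - (\sum_(k < n) wq k * Lq k + \sum_(k < n) wv k * Lv k + wz * Lz)
    - (RE + E) * (wz - \sum_(i < n) Lv i * wq i))
 = \sum_(i < n) wq i * (Lq i - a i - (Ku + RE + E) * Lv i) + wz * (Lz + (Ku + RE + E)).
Proof.
rewrite big_split /=.
have -> : \sum_(i < n) wq i * (Lq i - a i - (Ku + RE + E) * Lv i) =
  \sum_(i < n) wq i * Lq i - \sum_(i < n) a i * wq i
   - (Ku + RE + E) * \sum_(i < n) Lv i * wq i.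
  by rewrite mulr_sumr -!sumrB; apply: eq_bigr => i _; ring.
have -> : \sum_(i < n) d i * v i = \sum_(i < n) v i * d i.
  by apply: eq_bigr => i _; rewrite mulrC.
ring.
Qed.

Lemma Phi (Rf : T -> T) p u w : qc u = vc p ->
  flatL L p u w - gammaEL L Rf p w =
  \sum_(i < n) qc w 0 i * (pdq L i p - 'D_u (pdv L i) p
      - (etaL L p u + dfun (energy L) p (Rf p) + energy L p) * pdv L i p)
  + zc w * (pdz L p + (etaL L p u + dfun (energy L) p (Rf p) + energy L p)).
Proof.
move=> hu.
rewrite /flatL /gammaEL dform_eta (D_energy p w) (@decomp R n L p w (hL p)) hu.
move: (dfun (energy L) p (Rf p)) (energy L p) (etaL L p u) => RE E Ku.
rewrite /etaL.
exact: (alg1 (fun i => 'D_u (pdv L i) p) (fun i => 'D_w (pdv L i) p)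
  (fun i => qc w 0 i) (fun i => vc w 0 i) (fun i => vc p 0 i)
  (fun i => pdv L i p) (fun i => pdq L i p) (zc w) (pdz L p) Ku RE E).
Qed.

Lemma alg2 (Rq Rv v b Lv Lq Pz : 'I_n -> R) (Pq Pv : 'I_n -> 'I_n -> R) (Rz c Lz : R) :
  (forall k, \sum_(i < n) Pv i k * Rq i = 0) ->
  \sum_(i < n) Pz i * Rq i = 0 ->
  Rz - \sum_(i < n) Lv i * Rq i = 1 ->
  \sum_(i < n) Rq i * ((\sum_(k < n) v k * Pq i k + \sum_(k < n) b k * Pv i k + c * Pz i)
        - Lq i - Lv i * Lz)
  = \sum_(i < n) (Rv i * Lv i + v i * \sum_(j < n) Pq j i * Rq j)
    - (\sum_(k < n) Rq k * Lq k + \sum_(k < n) Rv k * Lv k + Rz * Lz) + Lz.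
Proof.
move=> hv hz heta.
have e1 : \sum_(i < n) Rq i * ((\sum_(k < n) v k * Pq i k + \sum_(k < n) b k * Pv i k + c * Pz i)
        - Lq i - Lv i * Lz) =
   \sum_(i < n) \sum_(k < n) Rq i * (v k * Pq i k) + \sum_(i < n) \sum_(k < n) Rq i * (b k * Pv i k)
   + c * \sum_(i < n) Pz i * Rq i - \sum_(i < n) Rq i * Lq i - Lz * \sum_(i < n) Lv i * Rq i.
  symmetry.
  rewrite [c * _]mulr_sumr [Lz * _]mulr_sumr -!sumrN -!big_split /=.
  apply: eq_bigr => i _.
  rewrite -!mulr_sumr; ring.
rewrite e1 hz.
have e2 : \sum_(i < n) \sum_(k < n) Rq i * (b k * Pv i k) = 0.
  rewrite exchange_big big1 // => k _; transitivity (b k * \sum_(i < n) Pv i k * Rq i); last by rewrite hv mulr0.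
  by rewrite mulr_sumr; apply: eq_bigr => i _; ring.
have e3 : \sum_(i < n) \sum_(k < n) Rq i * (v k * Pq i k) =
   \sum_(k < n) v k * \sum_(j < n) Pq j k * Rq j.
  rewrite exchange_big; apply: eq_bigr => k _; rewrite mulr_sumr; apply: eq_bigr => i _; ring.
rewrite e2 e3 big_split /=.
have e4 : \sum_(k < n) Rq k * Lq k = \sum_(i < n) Rq i * Lq i by [].
have -> : Rz = 1 + \sum_(i < n) Lv i * Rq i by rewrite -heta; ring.
ring.
Qed.

Lemma sum_delta (X : 'I_n -> R) k : \sum_(i < n) X i * ('e_k : 'rV[R]_n) 0 i = X k.
Proof.
rewrite (bigD1 k) //= big1 ?addr0.
  by rewrite mxE !eqxx mulr1.
move=> i ik; rewrite mxE eqxx /=.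
by rewrite (negbTE ik) mulr0.
Qed.

Lemma sum_zero (X : 'I_n -> R) : \sum_(i < n) X i * (0 : 'rV[R]_n) 0 i = 0.
Proof. by rewrite big1 // => i _; rewrite mxE mulr0. Qed.

Lemma key Rf p u : is_Reeb L Rf -> qc u = vc p ->
  \sum_(i < n) qc (Rf p) 0 i * ('D_u (pdv L i) p - pdq L i p - pdv L i p * pdz L p)
  = dfun (energy L) p (Rf p) + pdz L p.
Proof.
move=> hR hu; have [h1 h2] := hR p.
have hq k : 'D_(Rf p) (pdv L k) p = \sum_(j < n) pdq (pdv L j) k p * qc (Rf p) 0 j.
  have := h1 (dq_vec R k); rewrite dform_eta.
  rewrite (_ : qc (dq_vec R k) = 'e_k) // sum_delta.
  by move/eqP; rewrite addrC subr_eq0 => /eqP.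
have hv k : \sum_(j < n) pdv (pdv L j) k p * qc (Rf p) 0 j = 0.
  have := h1 (dv_vec R k); rewrite dform_eta.
  by rewrite (_ : qc (dv_vec R k) = 0) // sum_zero oppr0 add0r.
have hz : \sum_(j < n) pdz (pdv L j) p * qc (Rf p) 0 j = 0.
  have := h1 (dz_vec R n); rewrite dform_eta.
  by rewrite (_ : qc (dz_vec R n) = 0) // sum_zero oppr0 add0r.
have E1 i : 'D_u (pdv L i) p = \sum_(k < n) vc p 0 k * pdq (pdv L i) k p
   + \sum_(k < n) vc u 0 k * pdv (pdv L i) k p + zc u * pdz (pdv L i) p.
  by rewrite decomp ?hu //; exact: dLv.
rewrite D_energy (@decomp R n L p (Rf p) (hL p)).
under eq_bigr => i _ do rewrite E1.
under [in RHS]eq_bigr => i _ do rewrite hq.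
exact: (alg2 (fun i => qc (Rf p) 0 i) (fun i => vc (Rf p) 0 i) (fun i => vc p 0 i)
  (fun i => vc u 0 i) (fun i => pdv L i p) (fun i => pdq L i p) (fun i => pdz (pdv L i) p)
  (fun i k => pdq (pdv L i) k p) (fun i k => pdv (pdv L i) k p) (zc (Rf p)) (zc u) (pdz L p)
  hv hz h2).
Qed.

Lemma sum_delta' (X : 'I_n -> R) k : \sum_(i < n) ('e_k : 'rV[R]_n) 0 i * X i = X k.
Proof. rewrite -(sum_delta X k); apply: eq_bigr => i _; exact: mulrC. Qed.

Lemma sum_zero' (X : 'I_n -> R) : \sum_(i < n) (0 : 'rV[R]_n) 0 i * X i = 0.
Proof. by rewrite big1 // => i _; rewrite mxE mul0r. Qed.

Lemma alg3 (Dw : T -> R) (Lq D Lv Rq v b Pz : 'I_n -> R) (Pq Pv : 'I_n -> 'I_n -> R)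
   (c L0 RE Lz : R) :
  (forall w, Dw w = \sum_(i < n) qc w 0 i * (Lq i - D i - (c - L0 + RE) * Lv i)
        + zc w * (Lz + (c - L0 + RE))) ->
  \sum_(i < n) Rq i * (D i - Lq i - Lv i * Lz) = RE + Lz ->
  (forall i, D i = \sum_(k < n) v k * Pq i k + \sum_(k < n) b k * Pv i k + c * Pz i) ->
  (forall w, Dw w = 0) <->
  (c = L0 /\ forall j, \sum_(i < n) b i * Pv j i + \sum_(i < n) v i * Pq j i + L0 * Pz j
      - Lq j = Lv j * Lz).
Proof.
move=> hPhi hkey E1; split.
  move=> H.
  have hz := H (dz_vec R n); rewrite hPhi in hz.
  rewrite (_ : qc (dz_vec R n) = 0) // sum_zero' (_ : zc (dz_vec R n) = 1) // in hz.
  have hK : c - L0 + RE = - Lz by lra.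
  have hA j : D j - Lq j - Lv j * Lz = 0.
    have := H (dq_vec R j); rewrite hPhi.
    rewrite (_ : qc (dq_vec R j) = 'e_j) // sum_delta' (_ : zc (dq_vec R j) = 0) //.
    rewrite hK => h.
    transitivity (- (Lq j - D j - - Lz * Lv j + 0 * (Lz + - Lz))); first ring.
    by rewrite h oppr0.
  have hRE : RE + Lz = 0.
    by rewrite -hkey big1 // => i _; rewrite hA mulr0.
  have hc : c = L0 by lra.
  split => // j.
  have := hA j; rewrite E1 -hc => h; lra.
move=> [hc Hj].
have hA j : D j - Lq j - Lv j * Lz = 0.
  by rewrite E1 hc; have := Hj j; lra.
have hRE : RE + Lz = 0.
  by rewrite -hkey big1 // => i _; rewrite hA mulr0.
move=> w; rewrite hPhi big1; last first.
  move=> i _; have := hA i => h.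
  rewrite (_ : Lq i - D i - (c - L0 + RE) * Lv i = 0) ?mulr0 //.
  have hR : RE = - Lz by lra.
  rewrite hc hR.
  transitivity (- (D i - Lq i - Lv i * Lz)); first ring.
  by rewrite h oppr0.
rewrite hc; rewrite (_ : Lz + (L0 - L0 + RE) = 0) ?mulr0 ?add0r //; lra.
Qed.

Lemma part1 Rf (X : T -> T) p : is_Reeb L Rf -> qc (X p) = vc p ->
  (forall w, flatL L p (X p) w = gammaEL L Rf p w) <-> Herglotz L X p.
Proof.
move=> hR hu.
have hK : etaL L p (X p) + dfun (energy L) p (Rf p) + energy L p
    = zc (X p) - L p + dfun (energy L) p (Rf p).
  rewrite /etaL hu energyE.
  under eq_bigr => i _ do rewrite mulrC.
  ring.
have hPhi w : flatL L p (X p) w - gammaEL L Rf p w =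
   \sum_(i < n) qc w 0 i * (pdq L i p - 'D_(X p) (pdv L i) p
      - (zc (X p) - L p + dfun (energy L) p (Rf p)) * pdv L i p)
  + zc w * (pdz L p + (zc (X p) - L p + dfun (energy L) p (Rf p))).
  by rewrite Phi // hK.
have E1 i : 'D_(X p) (pdv L i) p = \sum_(k < n) vc p 0 k * pdq (pdv L i) k p
   + \sum_(k < n) vc (X p) 0 k * pdv (pdv L i) k p + zc (X p) * pdz (pdv L i) p.
  by rewrite decomp ?hu //; exact: dLv.
have := alg3 (fun w => flatL L p (X p) w - gammaEL L Rf p w) (fun i => pdq L i p)
  (fun i => 'D_(X p) (pdv L i) p) (fun i => pdv L i p) (fun i => qc (Rf p) 0 i)
  (fun i => vc p 0 i) (fun i => vc (X p) 0 i) (fun i => pdz (pdv L i) p)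
  (fun i k => pdq (pdv L i) k p) (fun i k => pdv (pdv L i) k p) (zc (X p)) (L p)
  (dfun (energy L) p (Rf p)) (pdz L p) hPhi (key Rf p (X p) hR hu) E1.
move=> [H1 H2]; split.
  by move=> H; apply: H1 => w /=; rewrite H subrr.
by move=> hH w; apply/eqP; rewrite -subr_eq0; apply/eqP; exact: (H2 hH w).
Qed.

Lemma chain (V : normedModType R) (f : T -> V) (gam : R -> T) t :
  derivable gam t 1 -> differentiable f (gam t) ->
  'D_1 (fun s => f (gam s)) t = 'D_('D_1 gam t) f (gam t).
Proof.
move=> dg df.
have dg' : differentiable gam t by apply/derivable1_diffP.
rewrite (_ : (fun s => f (gam s)) = f \o gam) //.
rewrite deriveE; last exact: differentiable_comp.
by rewrite diff_comp // (deriveE _ df) (deriveE _ dg').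
Qed.

Lemma alg4 (S1 S2 c Pz Lq Lv Lz L0 : R) : c = L0 ->
  S2 + S1 + L0 * Pz - Lq = Lv * Lz -> S1 + S2 + c * Pz - Lq = Lv * Lz.
Proof. by move=> -> <-; ring. Qed.
End M2.

Theorem mainTheorem8 (R : realType) (n : nat) (L : TQR R n -> R)
    (N : set (TQR R n)) (X : TQR R n -> TQR R n) (Rf : TQR R n -> TQR R n) :
  (forall p, differentiable L p) ->
  (forall (u : TQR R n) p, differentiable (fun x => 'D_u L x) p) ->
  is_Reeb L Rf ->
  (forall p, N p -> Sendo (X p) = Liouville p) ->
  (forall p, N p ->
     ((forall w, flatL L p (X p) w = gammaEL L Rf p w) <-> Herglotz L X p)) /\
  ((forall p, N p -> Herglotz L X p) ->
   forall gam : R -> TQR R n,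
     (forall t, N (gam t)) ->
     (forall t, derivable gam t 1 /\ 'D_1 gam t = X (gam t)) ->
     forall t,
       'D_1 (fun s => qc (gam s)) t = vc (gam t) /\
       'D_1 (fun s => zc (gam s)) t = L (gam t) /\
       forall i : 'I_n,
         'D_1 (fun s => pdv L i (gam s)) t - pdq L i (gam t)
         = pdv L i (gam t) * pdz L (gam t)).
Proof.
move=> hL hL2 hR hS.
have hq p : N p -> qc (X p) = vc p.
  by move=> Np; have := hS p Np; move/(congr1 (fun x => x.1.2)).
split.
  move=> p Np; apply: part1 => //; exact: hq.
move=> hH gam hN hg t.
have [dg Dg] := hg t.
have [hc hj] := hH _ (hN t).
split.
  rewrite (@chain R n _ _ gam t dg (@D_qc R n (gam t)).1) Dg (@D_qc R n (gam t)).2; exact: hq.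
split.
  by rewrite (@chain R n _ _ gam t dg (@D_zc R n (gam t)).1) Dg (@D_zc R n (gam t)).2.
move=> i.
rewrite (@chain R n _ _ gam t dg (@dLv R n L hL2 i (gam t))) Dg.
rewrite (@decomp R n _ _ _ (@dLv R n L hL2 i (gam t))).
rewrite (hq _ (hN t)).
exact: (@alg4 R _ _ _ _ _ _ _ _ hc (hj i)).
Qed.
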